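(* Every bijective (injective) sequence in a group has a proper subsequence.
   Context: Groups are written additively and are not assumed commutative. For a sequence $a_1,a_2,\dotsc$ and a finite nonempty index set $F=\{i_1<\dotsb<i_m\}\subseteq\mathbb N$, let $a_F:=a_{i_1}+\dotsb+a_{i_m}$. For finite index sets $F_1,F_2$, write $F_1<F_2$ if every element of $F_1$ is smaller than every element of $F_2$. A sequence $a_1,a_2,\dotsc$ is proper if $a_{F_1}\ne a_{F_2}$ for all nonempty finite index sets $F_1<F_2$. *)

(* Defs.v *)
From HB Require Import structures.
From mathcomp Require Import all_boot.
From mathcomp Require Import monoid.
Set Implicit Arguments. Unset Strict Implicit. Unset Printing Implicit Defensive.

(* Groups: MathComp's (possibly infinite, non-commutative) [groupType] from
   boot/monoid.v.  The paper writes the group law additively; here it is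
   written [*] (notation only).  Sequences a_1, a_2, ... are functions
   [nat -> G] (indexed from 0). *)

Local Open Scope group_scope.

(* A finite nonempty index set F = {i_1 < ... < i_m} is represented by the
   strictly increasing nonempty list [:: i_1; ...; i_m]. *)
Definition index_set (F : seq nat) : bool := (F != [::]) && sorted ltn F.

Definition seq_sum (G : groupType) (a : nat -> G) (F : seq nat) : G :=
  foldr (fun i acc => a i * acc) 1 F.

Definition idx_lt (F1 F2 : seq nat) : bool :=
  all (fun i => all (fun j => i < j) F2) F1.

Definition proper_seq (G : groupType) (a : nat -> G) : Prop :=
  forall F1 F2 : seq nat, index_set F1 -> index_set F2 -> idx_lt F1 F2 ->
    seq_sum a F1 <> seq_sum a F2.

(* Main.v *)
Require Import Defs.
From HB Require Import structures.
From mathcomp Require Import all_boot.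
From mathcomp Require Import monoid.

Set Implicit Arguments. Unset Strict Implicit.
Local Open Scope group_scope.

Fixpoint sl (n : nat) : seq (seq nat) :=
  match n with
  | 0 => [:: [::]]
  | n'.+1 => sl n' ++ [seq rcons F n' | F <- sl n']
  end.

Lemma sorted_rcons_lt (F : seq nat) x :
  sorted ltn (rcons F x) -> sorted ltn F /\ all (fun i => i < x) F.
Proof.
elim: F => [|y F IH] //=.
rewrite (path_sortedE ltn_trans) all_rcons => /andP [/andP [yx ay] sF].
have [s1 a1] := IH sF.
by rewrite (path_sortedE ltn_trans) ay s1 yx a1.
Qed.

Lemma sl_mem n F : sorted ltn F -> all (fun i => i < n) F -> F \in sl n.
Proof.
elim: n F => [|n IH] F.
  by case: F => //= x F _ /andP [].
case/lastP: F => [|F x].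
  by move=> _ _; rewrite /= mem_cat IH.
move=> sFx; have [sF aF] := @sorted_rcons_lt _ _ sFx.
rewrite all_rcons => /andP [xn aF'].
rewrite /= mem_cat.
case: (ltngtP x n) => [xn' | nx | xe].
- apply/orP; left; apply: IH => //.
  by rewrite all_rcons xn' /=; apply/allP => i /(allP aF) /ltn_trans; apply.
- by rewrite ltnS leqNgt nx in xn.
subst x; apply/orP; right; apply/mapP; exists F => //; exact: IH.
Qed.

Fixpoint mx (h : nat -> nat) n := match n with 0 => 0 | n'.+1 => maxn (mx h n') (h n') end.

Lemma mx_ge h n i : i < n -> h i <= mx h n.
Proof.
elim: n => [|n IH] //=; rewrite ltnS leq_eqVlt => /orP [/eqP -> | /IH hi].
  by rewrite leq_max leqnn orbT.
by rewrite leq_max hi.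
Qed.

Definition Wset (G : groupType) (a : nat -> G) n (h : nat -> nat) : seq G :=
  let S := [seq seq_sum (fun i => a (h i)) F | F <- sl n] in
  [seq x^-1 * y | x <- S, y <- S].

Lemma step_ex (G : groupType) (a : nat -> G) (ha : injective a) n h :
  exists k, (mx h n < k) && (a k \notin Wset a n h).
Proof.
set W := Wset a n h.
set ks := iota (mx h n).+1 (size W).+1.
have : ~~ all (fun g => g \in W) (map a ks).
  apply/negP => /allP H.
  have := uniq_leq_size _ H.
  rewrite map_inj_uniq // iota_uniq size_map size_iota ltnn => /(_ isT) //.
case/allPn => g /mapP [k kin ->] nk.
exists k; rewrite nk andbT.
by move: kin; rewrite mem_iota => /andP [].
Qed.

Definition step (G : groupType) (a : nat -> G) (ha : injective a) n h :=
  xchoose (step_ex ha n h).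

Fixpoint gg (G : groupType) (a : nat -> G) (ha : injective a) n : nat -> nat :=
  match n with
  | 0 => fun _ => 0
  | n'.+1 => fun i => if i == n' then step ha n' (gg ha n') else gg ha n' i
  end.

Definition phi (G : groupType) (a : nat -> G) (ha : injective a) n :=
  step ha n (gg ha n).

Lemma gg_phi (G : groupType) (a : nat -> G) (ha : injective a) n i :
  i < n -> gg ha n i = phi ha i.
Proof.
elim: n => [|n IH] //=; rewrite ltnS leq_eqVlt => /orP [/eqP -> | hi].
  by rewrite eqxx.
by rewrite (ltn_eqF hi) IH.
Qed.

Lemma seq_sum_eq_in (G : groupType) (b c : nat -> G) F :
  (forall i, i \in F -> b i = c i) -> seq_sum b F = seq_sum c F.
Proof.
elim: F => [|x F IH] //= H.
rewrite /seq_sum /= -!/(seq_sum _ _) H ?mem_head // IH // => i iF.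
by apply: H; rewrite in_cons iF orbT.
Qed.

Lemma foldr_acc (G : groupType) (b : nat -> G) z F :
  foldr (fun i acc => b i * acc) z F = seq_sum b F * z.
Proof.
elim: F => [|x F IH] /=; first by rewrite /seq_sum /= mul1g.
by rewrite IH /seq_sum /= mulgA.
Qed.

Theorem lemma2p2 (G : groupType) (a : nat -> G) :
  injective a ->
  exists phi : nat -> nat,
    (forall n, phi n < phi n.+1) /\ proper_seq (fun n => a (phi n)).
Proof.
move=> ha; exists (phi ha); split.
  move=> n; rewrite {2}/phi.
  have /andP [lt _] := xchooseP (step_ex ha n.+1 (gg ha n.+1)).
  apply: leq_ltn_trans lt.
  by rewrite -(gg_phi ha (ltnSn n)); apply: mx_ge.
move=> F1 F2 /andP [_ s1] /andP [ne2 s2] lt12 E.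
case/lastP: F2 ne2 s2 lt12 E => // F2 x _ s2 lt12 E.
have [sF2 aF2] := @sorted_rcons_lt _ _ s2.
have a1 : all (fun i => i < x) F1.
  by apply/allP => i /(allP lt12); rewrite all_rcons => /andP [].
have /andP [_ key] := xchooseP (step_ex ha x (gg ha x)).
move/negP: key; apply.
set b := fun n => a (phi ha n).
have Eb : b x = (seq_sum b F2)^-1 * seq_sum b F1.
  by rewrite E /seq_sum foldr_rcons -/(seq_sum _ _) foldr_acc mulg1 mulKg.
have ch : forall F, all (fun i => i < x) F ->
    seq_sum b F = seq_sum (fun i => a (gg ha x i)) F.
  move=> F aF; apply: seq_sum_eq_in => i iF.
  by rewrite /b gg_phi //; apply: (allP aF).
have -> : xchoose (step_ex ha x (gg ha x)) = phi ha x by [].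
rewrite -/(b x) Eb (ch _ aF2) (ch _ a1).
apply/allpairsP; eexists (_, _); split; last reflexivity.
- by apply: map_f; apply: sl_mem.
- by apply: map_f; apply: sl_mem.
Qed.
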